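(* Let $T$ be a compact metric space, let $\eta$ be a sample-continuous max-infinitely divisible process on $T$ with vertex function identically $0$ and exponent measure $\mu$, and $\Phi=\sum_{i=1}^N\delta_{\phi_i}$ a Poisson random measure on $\mathbb{C}_0$ with intensity $\mu$, defined on $(\Omega,\mathcal F,\mathbb P)$ with a measurable enumeration $(\phi_i)$ of its atoms, such that $\eta=\max(\Phi)$. Let $K\subset T$ be closed. Then $\Phi_K^+=\sum_{i=1}^N1_{\{\phi_i\not<_K\eta\}}\delta_{\phi_i}$ and $\Phi_K^-=\sum_{i=1}^N1_{\{\phi_i<_K\eta\}}\delta_{\phi_i}$ are measurable maps from $(\Omega,\mathcal F)$ to $(M_p(\mathbb{C}_0),\mathcal M_p)$.
   Context: $\mathbb{C}_0$ is the set of continuous $f:T\to[0,\infty)$ not identically zero (sup norm). $M_p(\mathbb{C}_0)$ is the set of point measures $\sum_{i\in I}\delta_{f_i}$ on $\mathbb{C}_0$ with $\{i:\|f_i\|>\varepsilon\}$ finite for all $\varepsilon>0$, and $\mathcal M_p$ is the $\sigma$-algebra generated by $M\mapsto M(A)$, $A$ Borel. $\max(\Phi)(s)=\max\{\phi_i(s)\}$ ($0$ if $N=0$). The vertex function is $h(t)=\sup\{x:\mathbb P(\eta(t)\ge x)=1\}$; $\mu$ is a Borel measure on $\mathbb{C}_0$ with $\mu(\{\|f\|>\varepsilon\})<\infty$ for all $\varepsilon>0$ and $\mathbb P[\eta(K_i)<x_i,i\le n]=\exp[-\mu(\cup_i\{f(K_i)\ge x_i\})]$. $f<_Kg$ means $f(s)<g(s)$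 for all $s\in K$, and $f\not<_Kg$ its negation. *)

(* Defs.v *)
From HB Require Import structures.
From mathcomp Require Import all_boot all_order all_algebra.
From mathcomp Require Import all_classical all_reals all_analysis measurable_realfun.
Set Implicit Arguments. Unset Strict Implicit. Unset Printing Implicit Defensive.
Import Order.TTheory GRing.Theory Num.Theory.
Import numFieldNormedType.Exports.
Local Open Scope classical_set_scope.
Local Open Scope ring_scope.

Section Defs.
Context {R : realType} {T : metricType R}.

Definition supnorm (f : T -> R) : R := sup (range (fun t => `|f t|)).

Definition supdist (f g : T -> R) : R := sup (range (fun t => `|f t - g t|)).

Definition supK (K : set T) (f : T -> R) : R := sup (f @` K).

Definition C0 : set (T -> R) :=
  [set f : T -> R | continuous f /\ (forall t, 0 <= f t) /\ exists t, f t != 0].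

Definition C0open (U : set (T -> R)) : Prop :=
  U `<=` C0 /\ forall f, U f ->
    exists2 e : R, 0 < e & forall g, C0 g -> supdist f g < e -> U g.

Definition C0Borel : set (set (T -> R)) := <<s C0, C0open >>.

Definition C0measure (mu : set (T -> R) -> \bar R) : Prop :=
  mu set0 = 0%E /\ (forall A, C0Borel A -> (0 <= mu A)%E) /\
  forall F : nat -> set (T -> R), (forall n, C0Borel (F n)) -> trivIset setT F ->
    (fun n => \sum_(0 <= i < n) mu (F i))%E @ \oo --> mu (\bigcup_n F n).

(* N : option nat encodes a value in {0,1,2,...} u {oo} (None = oo);
   ltN i N means i < N, i.e. index i is an atom index (0-based). *)
Definition ltN (i : nat) (N : option nat) : Prop :=
  match N with None => True | Some n => (i < n)%N end.

Definition ptmeas (N : option nat) (f : nat -> T -> R) (P : nat -> Prop)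
  : set (T -> R) -> \bar R :=
  fun A => (\sum_(i <oo) (\1_[set j | ltN j N /\ P j /\ A (f j)] i : R)%:E)%E.

(* M_p(C_0) : point measures sum_{i in I} delta_{f_i} on C_0 with
   finitely many atoms of norm > eps for every eps > 0
   (the index set is necessarily countable, so it is taken to be {i | i < N}) *)
Definition Mp : set (set (T -> R) -> \bar R) :=
  [set M | exists (N : option nat) (f : nat -> T -> R),
     (forall i, ltN i N -> C0 (f i)) /\
     (forall e : R, 0 < e -> finite_set [set i | ltN i N /\ e < supnorm (f i)]) /\
     M = ptmeas N f (fun _ => True)].

Definition Mp_sigma : set (set (set (T -> R) -> \bar R)) :=
  <<s Mp, [set Mp `&` [set M | B (M A)] | A in C0Borel & B in
            [set B : set (\bar R) | measurable B]] >>.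

Definition Mp_measurable {d} {Omega : measurableType d}
  (X : Omega -> set (T -> R) -> \bar R) : Prop :=
  (forall w, Mp (X w)) /\ forall S, Mp_sigma S -> measurable (X @^-1` S).

Definition ltK (K : set T) (f g : T -> R) : Prop := forall s, K s -> f s < g s.

Definition is_max_of (N : option nat) (a : nat -> R) (y : R) : Prop :=
  (N = Some 0%N -> y = 0) /\
  (N <> Some 0%N -> (exists2 i, ltN i N & a i = y) /\ forall i, ltN i N -> a i <= y).

Section Proba.
Context {d : measure_display} {Omega : measurableType d}.
Variable P : probability Omega R.

Definition vertex (eta : Omega -> T -> R) (t : T) : R :=
  sup [set x : R | P [set w | x <= eta w t] = 1%E].

Definition maxid_exponent (eta : Omega -> T -> R) (mu : set (T -> R) -> \bar R)
  : Prop :=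
  (forall t, measurable_fun setT (fun w => eta w t)) /\
  (forall w, continuous (eta w)) /\
  (forall t, vertex eta t = 0) /\
  C0measure mu /\
  (forall e : R, 0 < e -> (mu (C0 `&` [set f | (e < supnorm f)%R]) < +oo)%E) /\
  (forall (n : nat) (K : 'I_n -> set T) (x : 'I_n -> R),
      (forall i, closed (K i) /\ K i !=set0 /\ 0 < x i) ->
      P [set w | forall i, supK (K i) (eta w) < x i] =
      expeR (- mu (C0 `&` [set f | exists i, (x i <= supK (K i) f)%R]))%E).

Definition poisson_count (X : Omega -> \bar R) (m : \bar R) : Prop :=
  match m with
  | EFin m => forall k : nat, P [set w | X w = (k%:R)%:E] = (expR (- m) * m ^+ k / k`!%:R)%:E
  | _ => P [set w | X w = +oo%E] = 1%E
  end.

Definition poisson_rm (N : Omega -> option nat) (phi : nat -> Omega -> T -> R)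
  (mu : set (T -> R) -> \bar R) : Prop :=
  let Phi := fun w => ptmeas (N w) (fun i => phi i w) (fun _ => True) in
  (forall k, measurable [set w | N w = k]) /\
  (forall i w, ltN i (N w) -> C0 (phi i w)) /\
  (forall i A, C0Borel A -> measurable [set w | ltN i (N w) /\ A (phi i w)]) /\
  Mp_measurable Phi /\
  (forall A, C0Borel A -> poisson_count (fun w => Phi w A) (mu A)) /\
  (forall (n : nat) (A : 'I_n -> set (T -> R)) (B : 'I_n -> set (\bar R)),
     (forall i, C0Borel (A i) /\ measurable (B i)) ->
     (forall i j, i != j -> A i `&` A j = set0) ->
     P (\bigcap_(i in [set: 'I_n]) [set w | B i (Phi w (A i))]) =
     (\prod_(i < n) P [set w | B i (Phi w (A i))])%E).

End Proba.
End Defs.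

(* Main.v *)
Require Import Defs.
From HB Require Import structures.
From mathcomp Require Import all_boot all_order all_algebra.
From mathcomp Require Import all_classical all_reals all_analysis measurable_realfun.
From mathcomp Require Import finmap.
From mathcomp Require Import lra.
Import Order.TTheory GRing.Theory Num.Theory.
Import numFieldNormedType.Exports.
Local Open Scope classical_set_scope.
Local Open Scope ring_scope.
Local Open Scope card_scope.

Section Count.
Context {R : realType} {T : metricType R}.

Lemma ptmeas_esum (N : option nat) (f : nat -> T -> R) (P : nat -> Prop) A :
  ptmeas N f P A = (\esum_(i in [set i | ltN i N /\ P i /\ A (f i)]) (1 : \bar R))%E.
Proof.
rewrite /ptmeas nneseries_esumT; last by move=> n; rewrite lee_fin indicE.
rewrite [in RHS]esum_mkcond; apply: eq_esum => i _ /=.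
by rewrite indicE; case: (i \in _).
Qed.

Lemma esum1_infinite (S : set nat) : infinite_set S ->
  (\esum_(i in S) (1 : \bar R))%E = +oo%E.
Proof.
move=> Sinf.
have H : forall n : nat, ((n%:R : R)%:E <= \esum_(i in S) (1 : \bar R))%E.
  move=> n; have [B BS Bn] := infinite_set_fset n Sinf.
  apply: esum_ge; exists [set x | x \in B]; first by split => //; exact: finite_fset.
  rewrite fsbig_finite ?set_fsetK; last exact: finite_fset.
  rewrite (eq_bigr (fun=> (1%R : R)%:E)) // sumEFin lee_fin.
  have -> : \sum_(i <- B) (1:R) = (size B)%:R.
    by rewrite -sum1_size natr_sum.
  by rewrite ler_nat.
have H0 := H 0%N; move: H0 H; case: (\esum_(i in S) (1 : \bar R))%E => // r _ H.
have := H (Num.Def.trunc r).+1; rewrite lee_fin => /(lt_le_trans (truncnS_gt r)).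
by rewrite ltxx.
Qed.

Lemma enum_nat (S : set nat) :
  exists N' : option nat, exists g : nat -> nat, set_bij [set j | ltN j N'] S g.
Proof.
have [Sfin|Sinf] := pselect (finite_set S).
  have [n Sn] := Sfin; move/card_esym: Sn => /card_set_bijP[g gb].
  by exists (Some n), g.
have : [set: nat] #= S.
  by apply: Cantor_Bernstein; [exact/infiniteP | exact: card_leT].
move=> /card_set_bijP[g gb]; exists None, g.
by rewrite (_ : [set j | ltN j None] = setT) //; apply/seteqP; split.
Qed.

Lemma thin_Mp (N : option nat) (f : nat -> T -> R) (Q : nat -> Prop) :
  (forall i, ltN i N -> C0 (f i)) ->
  (forall e : R, 0 < e -> finite_set [set i | ltN i N /\ e < supnorm (f i)]) ->
  Mp (ptmeas N f Q).
Proof.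
move=> fC0 ffin.
have [N' [g [gf gi gs]]] := enum_nat [set i | ltN i N /\ Q i].
exists N', (f \o g); split; [|split].
- by move=> j /gf [gN _]; exact: fC0.
- move=> e e0.
  set X := [set j | ltN j N' /\ e < supnorm ((f \o g) j)].
  have gX : g @` X `<=` [set i | ltN i N /\ e < supnorm (f i)].
    by move=> _ [j [jN je] <-]; have [? _] := gf j jN.
  have Xinj : {in X &, injective g}.
    by move=> a b /set_mem[aN _] /set_mem[bN _]; apply: gi; exact: mem_set.
  rewrite -(eq_finite_set (inj_card_eq Xinj)).
  exact: sub_finite_set gX (ffin e e0).
- apply/funext => A; rewrite !ptmeas_esum.
  apply: (@reindex_esum _ _ _ _ _ g); split.
  + by move=> j [jN [_ Aj]]; have [? ?] := gf j jN.
  + by move=> a b /set_mem[aN _] /set_mem[bN _]; apply: gi; exact: mem_set.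
  + move=> i [iN [Qi Ai]]; have [j jN ji] := gs i (conj iN Qi).
    by exists j => //; split => //; split => //=; rewrite ji.
Qed.

Lemma esum1_finite (S : set nat) : finite_set S ->
  (\esum_(i in S) (1 : \bar R))%E <> +oo%E.
Proof.
move=> Sfin; rewrite esum_fset // fsbig_finite //.
by rewrite (eq_bigr (fun=> (1%R : R)%:E)) // sumEFin.
Qed.

Lemma Mp_fin (N : option nat) (f : nat -> T -> R) :
  (forall i, ltN i N -> C0 (f i)) -> Mp (ptmeas N f (fun _ => True)) ->
  forall e : R, 0 < e -> finite_set [set i | ltN i N /\ e < supnorm (f i)].
Proof.
move=> fC0 [N2 [f2 [f2C0 [f2fin E]]]] e e0.
have := congr1 (fun M => M [set h | C0 h /\ e < supnorm h]) E.
rewrite /= !ptmeas_esum => E2.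
have Sy : finite_set [set i | ltN i N2 /\ True /\ (C0 (f2 i) /\ e < supnorm (f2 i))].
  apply: sub_finite_set (f2fin e e0) => i [iN [_ [_ ?]]]; by split.
have [Sx|Sinf] := pselect (finite_set [set i | ltN i N /\ True /\ (C0 (f i) /\ e < supnorm (f i))]); last first.
  by have := esum1_finite _ Sy; rewrite -E2 esum1_infinite.
apply: sub_finite_set Sx => i [iN ie]; split => //; split => //; split => //.
exact: fC0.
Qed.

Lemma Mp_meas_gen {d} {Omega : measurableType d}
  (X : Omega -> set (T -> R) -> \bar R) :
  (forall w, Mp (X w)) ->
  (forall A, C0Borel A -> measurable_fun setT (fun w => X w A)) ->
  Mp_measurable X.
Proof.
move=> XMp Xm; split => // S.
apply: (@smallest_sub _ (sigma_algebra Mp) _ [set S | measurable (X @^-1` S)]).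
- split => /=.
  + by rewrite preimage_set0.
  + move=> A mA.
    rewrite (_ : X @^-1` (Mp `\` A) = ~` (X @^-1` A)); first exact: measurableC.
    by apply/seteqP; split => w /=; [case|move=> nA; split => //; exact: XMp].
  + by move=> F mF; rewrite preimage_bigcup; exact: bigcupT_measurable.
- move=> _ [A AB [B mB <-]] /=.
  rewrite preimage_setI.
  rewrite (_ : X @^-1` Mp = setT); last by apply/seteqP; split => // w _; exact: XMp.
  rewrite setTI.
  have := Xm A AB measurableT B mB; by rewrite setTI.
Qed.

Lemma ptmeas_meas {d} {Omega : measurableType d} (Nw : Omega -> option nat)
  (phi : nat -> Omega -> T -> R) (Qw : Omega -> nat -> Prop) (A : set (T -> R)) :
  (forall i, measurable [set w | ltN i (Nw w) /\ Qw w i /\ A (phi i w)]) ->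
  measurable_fun setT (fun w => ptmeas (Nw w) (fun i => phi i w) (Qw w) A).
Proof.
move=> mE.
rewrite (_ : (fun w => _) = (fun w => \sum_(i <oo | i \in [pred _ | true])
   ((\1_[set w | ltN i (Nw w) /\ Qw w i /\ A (phi i w)] w : R)%:E))%E).
  apply: ge0_emeasurable_sum.
    by move=> k x _ _; rewrite lee_fin indicE.
  move=> k _; apply/measurable_EFinP; exact: measurable_indic.
apply/funext => w; rewrite /ptmeas; apply: eq_eseriesr => i _.
by rewrite !indicE.
Qed.
End Count.

Section Pointed.
Context {R : realType} {T : metricType R} (t0 : T).
Definition pT : Type := T.
HB.instance Definition _ := Topological.on pT.
HB.instance Definition _ := isPointed.Build pT t0.
Lemma cc (K : set T) : compact K -> cover_compact (K : set pT).
Proof. move=> Kc. rewrite -compact_cover. exact: Kc. Qed.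
End Pointed.

Section Topo.
Context {R : realType} {T : metricType R}.
Hypothesis Tc : compact [set: T].

Lemma range_ub (f : T -> R) : continuous f -> has_ubound (range f).
Proof.
move=> fc; apply: (@bounded_fun_has_ubound T R f).
have := compact_bounded (continuous_compact (continuous_subspaceT fc) Tc).
rewrite /bounded_near /globally /= => B. near=> M => x _. apply: (near B M). by []. by exists x.
Unshelve. all: by end_near.
Unshelve. all: by end_near. 
Qed.

Lemma supdist_ge {f g : T -> R} x : continuous f -> continuous g ->
  `|f x - g x| <= supdist f g.
Proof.
move=> fc gc; apply: ub_le_sup; last by exists x.
apply: range_ub => t.
apply: (continuous_comp (f := fun t => f t - g t) (g := Num.norm)).
  exact: (continuousB (fc t) (gc t)).
exact: norm_continuous.
Qed.

Lemma C0open_lt (x : T) (c : R) : C0open [set f | C0 f /\ f x < c].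
Proof.
split; first by move=> f [].
move=> f [f0 fx]; exists (c - f x); first by rewrite subr_gt0.
move=> g g0 hd; split => //.
have := supdist_ge x f0.1 g0.1.
have : g x - f x <= `|f x - g x| by rewrite distrC ler_norm.
move: hd; lra.
Qed.

Lemma C0Borel_lt (x : T) (c : R) : C0Borel [set f | C0 f /\ f x < c].
Proof. by apply: sub_sigma_algebra; exact: C0open_lt. Qed.


Lemma small_inv (r : R) : 0 < r -> exists n : nat, n.+1%:R^-1 < r.
Proof.
move=> r0; exists (Num.Def.trunc r^-1).
rewrite invf_plt ?posrE ?ltr0Sn //; exact: truncnS_gt.
Qed.

Lemma fin_net (K : set T) : compact K -> forall r : R, 0 < r ->
  exists D : {fset T}, [set` D] `<=` K /\ K `<=` \bigcup_(x in [set` D]) ball x r.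
Proof.
move=> Kc0 r r0.
have [K0|/set0P[t0 _]] := eqVneq K set0.
  by rewrite K0; exists fset0%fset; split => // x; rewrite inE.
have Kc := cc t0 _ Kc0.

have [D' DK cov] := Kc T K (fun x => (ball x r)°) (fun _ _ => open_interior _)
  (fun k Kk => ex_intro2 _ _ k Kk (nbhsx_ballx k r r0)).
exists D'; split; first by move=> x xD; exact/set_mem/DK.
by move=> k /cov [x xD /interior_subset kx]; exists x.
Qed.

Lemma gap (K : set T) (g : T -> R) : compact K -> continuous g ->
  (forall s, K s -> 0 < g s) -> exists m : nat, forall s, K s -> m.+1%:R^-1 <= g s.
Proof.
move=> Kc0 gc gp.
have [K0|/set0P[t0 _]] := eqVneq K set0.
  by exists 0%N; rewrite K0.
have Kc := cc t0 _ Kc0.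
have cov : K `<=` \bigcup_(m in [set: nat]) [set s | m.+1%:R^-1 < g s]°.
  move=> s Ks; have [m hm] := small_inv _ (gp s Ks).
  exists m => //; exact: (cvgr_gt _ (gc s) _ hm).
have [D' _ cov'] := Kc nat setT _ (fun _ _ => open_interior _) cov.
exists (\max_(i <- D') i) => s /cov' [i iD /interior_subset /= hi].
apply/ltW/(le_lt_trans _ hi).
rewrite lef_pV2 ?posrE ?ltr0Sn // ler_nat ltnS.
exact: (leq_bigmax_seq (F := id) _ iD).
Qed.

Lemma ltK_char (K : set T) (Ds : nat -> {fset T}) (f g : T -> R) :
  (forall n, [set` Ds n] `<=` K /\
     K `<=` \bigcup_(x in [set` Ds n]) ball x (n.+1%:R^-1)) ->
  compact K -> continuous f -> continuous g ->
  ltK K f g <-> exists m : nat, forall n x, x \in Ds n -> f x + m.+1%:R^-1 <= g x.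
Proof.
move=> Dn Kc fc gc.
have hc : continuous (fun t => g t - f t).
  by move=> t; exact: (continuousB (gc t) (fc t)).
split.
- move=> fg.
  have [m hm] := gap K (fun t => g t - f t) Kc hc (fun s Ks => ltac:(by rewrite subr_gt0; exact: fg)).
  exists m => n x xD; have Kx := (Dn n).1 x xD.
  move: (hm x Kx); move: (m.+1%:R^-1 : R) => c; lra.
- move=> [m hm] s Ks; rewrite ltNge; apply/negP => gfs.
  have hcs : g s - f s < m.+1%:R^-1.
    have : 0 < m.+1%:R^-1 :> R by rewrite invr_gt0 ltr0Sn.
    move: gfs; move: (m.+1%:R^-1 : R) => c; lra.
  have H := @cvgr_lt _ _ _ _ (fun t => g t - f t) _ (hc s) _ hcs.
  have H' : \forall t \near s, g t - f t < m.+1%:R^-1.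
    by apply: H; typeclasses eauto.
  have [r /= r0 Br] := (iffLR (nbhs_ballP _ _)) H'.
  have [n hn] := small_inv _ r0; have [x xD bx] := (Dn n).2 s Ks.
  have := Br x (le_ball (ltW hn) (ball_sym bx)); have := hm n x xD.
  move: (m.+1%:R^-1 : R) => c /=; lra.
Qed.
End Topo.

Section Meas.
Context {R : realType} {T : metricType R} {d : measure_display} {Omega : measurableType d}.

Lemma meas_coord (D : set Omega) (a : Omega -> R) : measurable D ->
  (forall c, measurable (D `&` [set w | a w < c])) -> measurable_fun D a.
Proof.
move=> mD ha; apply: (measurability _ (RGenInftyO.measurableE R)) => //.
move=> _ [_ [c ->] <-].
rewrite (_ : a @^-1` _ = [set w | a w < c]); first exact: ha.
by apply/seteqP; split => w /=; rewrite in_itv.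
Qed.

Lemma meas_le (D : set Omega) (a b : Omega -> R) (c : R) : measurable D ->
  measurable_fun D a -> measurable_fun D b ->
  measurable (D `&` [set w | a w + c <= b w]).
Proof.
move=> mD ma mb.
have H := measurable_fun_ler (measurable_funD ma (measurable_cst c)) mb mD.
have := H [set true] ltac:(by []) .
rewrite /preimage /=.
by congr (measurable (_ `&` _)); apply/seteqP; split => w /=.
Qed.

Lemma C0Borel_C0 : C0Borel (@C0 R T).
Proof.
apply: sub_sigma_algebra; split => // f f0; exists 1 => //.
Qed.


Lemma L_meas (N : Omega -> option nat) (phi : nat -> Omega -> T -> R)
  (eta : Omega -> T -> R) (K : set T) :
  compact [set: T] -> closed K ->
  (forall i A, C0Borel A -> measurable [set w | ltN i (N w) /\ A (phi i w)]) ->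
  (forall i w, ltN i (N w) -> C0 (phi i w)) ->
  (forall t, measurable_fun setT (fun w => eta w t)) ->
  (forall w, continuous (eta w)) ->
  forall i, measurable [set w | ltN i (N w) /\ ltK K (phi i w) (eta w)].
Proof.
move=> Tc Kcl hN hC0 heta hcont i.
have Kc : compact K := subclosed_compact Kcl Tc (@subsetT _ K).
pose Di := [set w | ltN i (N w)].
have DiE : Di = [set w | ltN i (N w) /\ C0 (phi i w)].
  by apply/seteqP; split => w /=; [move=> h; split => //; exact: hC0|case].
have mDi : measurable Di by rewrite DiE; exact: hN C0Borel_C0.
have ma x : measurable_fun Di (fun w => phi i w x).
  apply: meas_coord => // c.
  rewrite (_ : _ `&` _ = [set w | ltN i (N w) /\ [set f | C0 f /\ f x < c] (phi i w)]).
    by apply: hN; exact: (C0Borel_lt Tc x c).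
  apply/seteqP; split => w /=; first by move=> [h1 h2]; split => //; split => //; exact: hC0.
  by move=> [h1 [_ h2]].
have mb x : measurable_fun Di (fun w => eta w x).
  exact: measurable_funS (heta x).
have : forall n : nat, exists D : {fset T}, [set` D] `<=` K /\
     K `<=` \bigcup_(x in [set` D]) ball x (n.+1%:R^-1 : R).
  by move=> n; apply: (fin_net _ Kc); rewrite invr_gt0 ltr0Sn.
move=> /choice[Ds Dn].
rewrite (_ : [set w | _] = \bigcup_m \bigcap_n (Di `&` \bigcap_(x in [set` Ds n])
   (Di `&` [set w | phi i w x + m.+1%:R^-1 <= eta w x]))).
  apply: bigcupT_measurable => m; apply: bigcapT_measurable => n.
  apply: measurableI => //; apply: fin_bigcap_measurable; first exact: finite_fset.
  by move=> x _; exact: meas_le.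
apply/seteqP; split => w /=.
- move=> [wN wK].
  have [m hm] := (ltK_char _ _ _ _ Dn Kc (hC0 _ _ wN).1 (hcont w)).1 wK.
  exists m => // n _; split => // x xD; split => //; exact: (hm n x xD).
- move=> [m _ hm].
  have wN : ltN i (N w) by have [] := hm 0%N I.
  split => //; apply: (ltK_char _ _ _ _ Dn Kc (hC0 _ _ wN).1 (hcont w)).2.
  by exists m => n x xD; have [_ h] := hm n I; have [] := h x xD.
Qed.
End Meas.

Theorem lemma3 (R : realType) (T : metricType R) (d : measure_display)
  (Omega : measurableType d) (P : probability Omega R)
  (eta : Omega -> T -> R) (mu : set (T -> R) -> \bar R)
  (N : Omega -> option nat) (phi : nat -> Omega -> T -> R) (K : set T) :
  compact [set: T] ->
  maxid_exponent P eta mu ->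
  poisson_rm P N phi mu ->
  (forall w s, is_max_of (N w) (fun i => phi i w s) (eta w s)) ->
  closed K ->
  Mp_measurable (fun w => ptmeas (N w) (fun i => phi i w)
                            (fun i => ~ ltK K (phi i w) (eta w))) /\
  Mp_measurable (fun w => ptmeas (N w) (fun i => phi i w)
                            (fun i => ltK K (phi i w) (eta w))).
Proof.
move=> Tc [heta [hcont _]] [_ [hC0 [hN [[PhiMp _] _]]]] _ Kcl.
have hL := L_meas _ _ _ _ Tc Kcl hN hC0 heta hcont.
have fin w := Mp_fin _ _ (fun i => hC0 i w) (PhiMp w).
split; apply: Mp_meas_gen.
- move=> w; apply: thin_Mp; [move=> i; exact: (hC0 i w) | exact: (fin w)].
- move=> A AB; apply: ptmeas_meas => i.
  rewrite (_ : [set w | _] = [set w | ltN i (N w) /\ A (phi i w)] `\`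
                             [set w | ltN i (N w) /\ ltK K (phi i w) (eta w)]).
    by apply: measurableD; [exact: hN|exact: hL].
  apply/seteqP; split => w /=; first by move=> [? [? ?]]; split => // -[].
  by move=> [[? ?] h]; split => //; split => // hK; exact: h.
- move=> w; apply: thin_Mp; [move=> i; exact: (hC0 i w) | exact: (fin w)].
- move=> A AB; apply: ptmeas_meas => i.
  rewrite (_ : [set w | _] = [set w | ltN i (N w) /\ A (phi i w)] `&`
                             [set w | ltN i (N w) /\ ltK K (phi i w) (eta w)]).
    by apply: measurableI; [exact: hN|exact: hL].
  apply/seteqP; split => w /=; first by move=> [? [? ?]].
  by move=> [[? ?] [_ ?]].
Qed.
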